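(* Let $OABC$ be a quadrilateral in the hyperbolic plane with right angles at $A$, $B$, $C$ and angle $\alpha\in(0,\pi/2)$ at $O$. Let $d$ be the length of $OA$, $L$ the length of $AB$, $\ell$ the length of $BC$, and let the length of $OC$ be $L+h$. Let $M$ be the point of the side $OC$ at hyperbolic distance $h$ from $O$ (equivalently, at distance $L$ from $C$). Place the quadrilateral in the Poincar\'e unit disc model with $O$ at the center of the disc, let $s$ be the Euclidean distance from $O$ to $A$ and $t$ the Euclidean distance from $O$ to $M$ (so that $d=\log\frac{1+s}{1-s}$ and $h=\log\frac{1+t}{1-t}$). Then \[ \tanh L=\frac{\cos\alpha}{\sin\alpha}\,\frac{1-s^2}{2s}\qquad\text{and}\qquad t=\frac{\cos\alpha}{\sin\alpha+1}\,s . \] *)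

(* Defs.v *)
From Stdlib Require Import Reals.
Open Scope R_scope.

Definition pt := (R * R)%type.

Definition cadd (z w : pt) : pt := (fst z + fst w, snd z + snd w).
Definition csub (z w : pt) : pt := (fst z - fst w, snd z - snd w).
Definition cmul (z w : pt) : pt :=
  (fst z * fst w - snd z * snd w, fst z * snd w + snd z * fst w).
Definition cconj (z : pt) : pt := (fst z, - snd z).
Definition cabs (z : pt) : R := sqrt (fst z * fst z + snd z * snd z).
Definition cone : pt := (1, 0).
Definition czero : pt := (0, 0).

Definition in_disc (z : pt) : Prop := cabs z < 1.

(* hyperbolic distance (curvature -1) in the Poincare disc model:
   d(z,w) = log((1+r)/(1-r)),  r = |z - w| / |1 - conj(w) z| *)
Definition hdist (z w : pt) : R :=
  let r := cabs (csub z w) / cabs (csub cone (cmul (cconj w) z)) in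
  ln ((1 + r) / (1 - r)).

(* m lies on the geodesic segment [p,q] (metric betweenness; the hyperbolic
   plane is uniquely geodesic) *)
Definition on_hseg (p q m : pt) : Prop :=
  hdist p m + hdist m q = hdist p q.

(* Euclidean tangent direction at p of the geodesic from p to q.
   The Moebius map phi_p(z) = (z - p)/(1 - conj(p) z) is a hyperbolic isometry
   sending p to 0 with phi_p'(p) = 1/(1-|p|^2) > 0, so the geodesic from p to q
   leaves p in the direction of phi_p(q) = (q-p)/(1-conj(p) q); we keep the
   positive multiple (q - p) * conj(1 - conj(p) q). *)
Definition tdir (p q : pt) : pt :=
  cmul (csub q p) (cconj (csub cone (cmul (cconj p) q))).

(* angle at p between the geodesics p->q and p->r (the model is conformal) *)
Definition hangle (p q r : pt) : R :=
  let u := tdir p q in let v := tdir p r in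
  acos (fst (cmul (cconj u) v) / (cabs u * cabs v)).

(* signed "turn" at p from direction towards q to direction towards r:
   the sign of sin of the oriented angle *)
Definition hturn (p q r : pt) : R := snd (cmul (cconj (tdir p q)) (tdir p r)).

(* O A B C (in this cyclic order) is a convex quadrilateral: its vertices are
   in the disc and at every vertex the oriented angle from the next vertex to
   the previous one has the same strict sign (all interior angles in (0,pi),
   consistently oriented). *)
Definition convex_quad (O A B C : pt) : Prop :=
  in_disc O /\ in_disc A /\ in_disc B /\ in_disc C /\
  ((0 < hturn O A C /\ 0 < hturn A B O /\ 0 < hturn B C A /\ 0 < hturn C O B) \/
   (hturn O A C < 0 /\ hturn A B O < 0 /\ hturn B C A < 0 /\ hturn C O B < 0)).

(* Main.v *)
Require Import Defs.
From Stdlib Require Import Reals Lra Nsatz.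
Open Scope R_scope.

Lemma acos_pi2 y : acos y = PI/2 -> y = 0.
Proof.
  pose proof PI_RGT_0.
  unfold acos; destruct (Rle_dec y (-1)); [lra|]; destruct (Rle_dec 1 y); [lra|].
  intros H1.
  assert (Ha : atan (y / sqrt (1 - y²)) = 0) by lra.
  assert (Hz : y / sqrt (1 - y²) = 0) by (rewrite <- (tan_atan (y / sqrt (1 - y²))), Ha; apply tan_0).
  assert (Hp : 0 < sqrt (1 - y²)) by (apply sqrt_lt_R0; unfold Rsqr; nra).
  unfold Rdiv in Hz. apply Rmult_integral in Hz. destruct Hz as [Hz|Hz]; auto.
  exfalso; apply (Rinv_neq_0_compat _ (Rgt_not_eq _ _ Hp)); auto.
Qed.

Lemma acos_val y a : 0 < a < PI/2 -> acos y = a -> y = cos a.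
Proof.
  intros Ha H. pose proof PI_RGT_0.
  assert (-1 < y < 1).
  { revert H; unfold acos; destruct (Rle_dec y (-1)); [lra|]; destruct (Rle_dec 1 y); [lra|]. lra. }
  rewrite <- H, cos_acos; lra.
Qed.

Lemma cabs0 u1 u2 : cabs (u1,u2) = 0 -> u1 = 0 /\ u2 = 0.
Proof. unfold cabs; simpl; intros H. apply sqrt_eq_0 in H; [|nra]. split; nra. Qed.

Lemma right_angle p q r : hangle p q r = PI/2 -> fst (cmul (cconj (tdir p q)) (tdir p r)) = 0.
Proof.
  unfold hangle. generalize (tdir p q) (tdir p r). intros [u1 u2] [v1 v2] H.
  apply acos_pi2 in H.
  destruct (Req_dec (cabs (u1,u2)) 0) as [E|E].
  { apply cabs0 in E. destruct E; subst; simpl; ring. }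
  destruct (Req_dec (cabs (v1,v2)) 0) as [F|F].
  { apply cabs0 in F. destruct F; subst; simpl; ring. }
  unfold Rdiv in H. apply Rmult_integral in H. destruct H as [H|H]; auto.
  exfalso. revert H. apply Rinv_neq_0_compat. apply Rmult_integral_contrapositive; auto.
Qed.

Lemma tdir0 q : tdir czero q = q.
Proof. destruct q. unfold tdir, cmul, csub, cconj, cone, czero; simpl. f_equal; ring. Qed.

Lemma angle0 A C alpha : 0 < alpha < PI/2 -> hangle czero A C = alpha ->
  cabs A <> 0 -> cabs C <> 0 ->
  fst (cmul (cconj A) C) = cos alpha * (cabs A * cabs C).
Proof.
  intros Ha H HA HC. unfold hangle in H. rewrite !tdir0 in H.
  apply acos_val in H; auto. rewrite <- H. field. split; auto.
Qed.

Definition rr (z w : pt) : R := cabs (csub z w) / cabs (csub cone (cmul (cconj w) z)).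
Lemma hdist_eq z w : hdist z w = ln ((1 + rr z w) / (1 - rr z w)).
Proof. reflexivity. Qed.

Lemma cabs_sub0 z : cabs (csub z czero) = cabs z.
Proof. destruct z. unfold cabs; f_equal; simpl; ring. Qed.

Lemma rr0 z : rr czero z = cabs z.
Proof.
  destruct z as [z1 z2]. unfold rr.
  assert (E1 : cabs (csub czero (z1,z2)) = cabs (z1,z2)) by (unfold cabs; f_equal; simpl; ring).
  assert (E2 : cabs (csub cone (cmul (cconj (z1,z2)) czero)) = 1)
    by (unfold cabs; rewrite <- sqrt_1; f_equal; simpl; ring).
  rewrite E1, E2. field.
Qed.

Lemma cabs_nonneg z : 0 <= cabs z.
Proof. unfold cabs; apply sqrt_pos. Qed.

Lemma cabs_sq u1 u2 : cabs (u1,u2) * cabs (u1,u2) = u1*u1+u2*u2.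
Proof. unfold cabs; simpl; apply sqrt_sqrt; nra. Qed.

Lemma disc_sq u1 u2 : in_disc (u1,u2) -> u1*u1+u2*u2 < 1.
Proof. unfold in_disc; intros H. rewrite <- cabs_sq. pose proof (cabs_nonneg (u1,u2)).
  set (x := cabs (u1,u2)) in *. assert (x*x <= x*1) by (apply Rmult_le_compat_l; lra). lra. Qed.

Lemma pdist z1 z2 w1 w2 : z1*z1+z2*z2 < 1 -> w1*w1+w2*w2 < 1 ->
  let X := (z1-w1)*(z1-w1)+(z2-w2)*(z2-w2) in
  let Y := (1 - (w1*z1+w2*z2))*(1 - (w1*z1+w2*z2)) + (w1*z2-w2*z1)*(w1*z2-w2*z1) in
  0 <= rr (z1,z2) (w1,w2) < 1 /\ rr (z1,z2) (w1,w2) * rr (z1,z2) (w1,w2) * Y = X /\ 0 < Y.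
Proof.
  intros Hz Hw X Y.
  assert (HX : 0 <= X) by (unfold X; apply Rplus_le_le_0_compat; apply Rle_0_sqr).
  assert (HXY : Y - X = (1 - (z1*z1+z2*z2))*(1-(w1*w1+w2*w2))) by (unfold X, Y; ring).
  assert (HP : 0 < (1 - (z1*z1+z2*z2))*(1-(w1*w1+w2*w2))) by (apply Rmult_lt_0_compat; lra).
  assert (HY : 0 < Y) by lra.
  assert (E : rr (z1,z2) (w1,w2) = sqrt X / sqrt Y).
  { unfold rr, cabs. f_equal; f_equal; unfold X, Y; simpl; ring. }
  clearbody X Y.
  assert (Hs : 0 < sqrt Y) by (apply sqrt_lt_R0; auto).
  assert (Hl : sqrt X < sqrt Y) by (apply sqrt_lt_1_alt; lra).
  pose proof (sqrt_pos X).
  rewrite E. repeat split.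
  - unfold Rdiv; apply Rmult_le_pos; [lra|]; apply Rlt_le, Rinv_0_lt_compat; lra.
  - apply (Rmult_lt_reg_r (sqrt Y)); auto. field_simplify; lra.
  - replace (sqrt X / sqrt Y * (sqrt X / sqrt Y) * Y) with ((sqrt X * sqrt X) * Y / (sqrt Y * sqrt Y)) by (field; lra).
    rewrite !sqrt_sqrt; try lra. field; lra.
  - auto.
Qed.
Lemma circ_orth a1 a2 b1 b2 :
  (a1*b1+a2*b2)*(1+(a1*a1+a2*a2)) = (a1*a1+a2*a2)*(1+(b1*b1+b2*b2)) ->
  (2*(a1*a1+a2*a2)*b1 - (1+(a1*a1+a2*a2))*a1)*fst (tdir (b1,b2) (a1,a2)) +
  (2*(a1*a1+a2*a2)*b2 - (1+(a1*a1+a2*a2))*a2)*snd (tdir (b1,b2) (a1,a2)) = 0.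
Proof. intros. unfold tdir, cmul, csub, cconj, cone; simpl. nsatz. Qed.

Lemma circ_right1 a1 a2 b1 b2 :
  fst (cmul (cconj (tdir (a1,a2) czero)) (tdir (a1,a2) (b1,b2))) = 0 ->
  (a1*b1+a2*b2)*(1+(a1*a1+a2*a2)) = (a1*a1+a2*a2)*(1+(b1*b1+b2*b2)).
Proof. unfold tdir, cmul, csub, cconj, cone, czero; simpl. intros. nsatz. Qed.

Lemma circ_right2 a1 a2 b1 b2 :
  fst (cmul (cconj (tdir (a1,a2) (b1,b2))) (tdir (a1,a2) czero)) = 0 ->
  (a1*b1+a2*b2)*(1+(a1*a1+a2*a2)) = (a1*a1+a2*a2)*(1+(b1*b1+b2*b2)).
Proof. unfold tdir, cmul, csub, cconj, cone, czero; simpl. intros. nsatz. Qed.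

Lemma twoD u1 u2 v1 v2 n1 n2 m1 m2 :
  u1*v1+u2*v2=0 -> n1*u1+n2*u2=0 -> m1*v1+m2*v2 = 0 -> v1*u2 - v2*u1 <> 0 ->
  n1*m1+n2*m2 = 0.
Proof. intros H1 H2 H3 H4.
 assert ((v1*u2 - v2*u1)*(n1*m1+n2*m2) = 0) by nsatz.
 apply Rmult_integral in H. destruct H; [contradiction|assumption]. Qed.

Lemma scal s c k sg P Q b :
  0 < s -> 0 < c ->
  P*(1+s*s) = s*s*(1+b) -> Q*(1+c*c) = c*c*(1+b) ->
  k*(1+s*s)*(1+c*c) = 4*s*c ->
  b*(s*s)*(c*c)*(sg*sg) = P*P*(c*c) - 2*P*Q*(s*c*k) + Q*Q*(s*s) ->
  k*k+sg*sg = 1 ->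
  k*k*((1-s*s)*(1-s*s)*(1-s*s)*(1-s*s))*(P*P) = 16*(sg*sg)*(s*s*s*s)*(P-s*s)*(1-P).
Proof. intros Hs Hc H1 H2 H3 H4 H5.
 assert (HQ: c*(4*s*s*s*Q - c*k*P*((1+s*s)*(1+s*s))) = 0) by nsatz.
 apply Rmult_integral in HQ. destruct HQ as [HQ|HQ]; [lra|].
 assert (E: c*c*s*s*(k*k*((1-s*s)*(1-s*s)*(1-s*s)*(1-s*s))*(P*P) - 16*(sg*sg)*(s*s*s*s)*(P-s*s)*(1-P)) = 0) by nsatz.
 assert (c*c*s*s <> 0) by (apply Rgt_not_eq; repeat apply Rmult_lt_0_compat; lra).
 apply Rmult_integral in E. destruct E as [E|E]; [contradiction|lra].
Qed.
Lemma sq_eq a b : 0 <= a -> 0 <= b -> a*a = b*b -> a = b.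
Proof. intros. nra. Qed.

Lemma final1 s sg k r X Y P b : 0 < s < 1 -> 0 < sg -> 0 < k -> r*r*Y = X -> 0 < Y -> 0 <= r ->
  X = b - 2*P + s*s -> Y = 1 - 2*P + s*s*b -> P*(1+s*s) = s*s*(1+b) ->
  k*k*((1-s*s)*(1-s*s)*(1-s*s)*(1-s*s))*(P*P) = 16*(sg*sg)*(s*s*s*s)*(P-s*s)*(1-P) ->
  k/sg*((1-s^2)/(2*s)) * (1 + r*r) = 2*r.
Proof.
  intros Hs Hsg Hk Hr HY Hr0 HX HYd Hc Hq.
  assert (E1 : s*s*(X+Y) = (1-s*s)*(1-s*s)*P) by (subst X Y; nsatz).
  assert (E2 : s*s*(X*Y) = (1-s*s)*(1-s*s)*(P-s*s)*(1-P)) by (subst X Y; nsatz).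
  set (T := k/sg*((1-s^2)/(2*s))).
  assert (HT : 2*s*sg*T = k*(1-s*s)) by (unfold T; field; lra).
  assert (HT0 : 0 < T).
  { unfold T. apply Rmult_lt_0_compat. apply Rdiv_lt_0_compat; lra.
    apply Rdiv_lt_0_compat; nra. }
  clearbody T.
  assert (Hq' : k*k*((1-s*s)*(1-s*s)*(1-s*s)*(1-s*s))*(P*P) - 16*(sg*sg)*(s*s*s*s)*(P-s*s)*(1-P) = 0) by lra.
  assert (E3 : (2*s*sg)*(2*s*sg)*(s*s)*(s*s)*(T*T*((X+Y)*(X+Y)) - 4*(X*Y)) = 0).
  { replace ((2*s*sg)*(2*s*sg)*(s*s)*(s*s)*(T*T*((X+Y)*(X+Y)) - 4*(X*Y))) with
      ((2*s*sg*T)*(2*s*sg*T)*((s*s*(X+Y))*(s*s*(X+Y))) - 16*(sg*sg)*(s*s)*(s*s)*(s*s*(X*Y))) by ring.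
    rewrite HT, E1, E2.
    transitivity ((1-s*s)*(1-s*s)*(k*k*((1-s*s)*(1-s*s)*(1-s*s)*(1-s*s))*(P*P) - 16*(sg*sg)*(s*s*s*s)*(P-s*s)*(1-P))); [ring|].
    rewrite Hq'; ring. }
  assert (E4 : T*T*((X+Y)*(X+Y)) - 4*(X*Y) = 0).
  { apply Rmult_integral in E3. destruct E3 as [E3|E3]; auto.
    exfalso. revert E3. apply Rgt_not_eq. repeat apply Rmult_lt_0_compat; nra. }
  assert (E5 : Y*Y*((T*(1+r*r))*(T*(1+r*r)) - (2*r)*(2*r)) = 0).
  { replace (Y*Y*((T*(1+r*r))*(T*(1+r*r)) - (2*r)*(2*r))) with
     (T*T*((Y + r*r*Y)*(Y+r*r*Y)) - 4*(r*r*Y)*Y) by ring.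
    rewrite Hr, <- E4; ring. }
  apply sq_eq; try nra.
  apply Rmult_integral in E5. destruct E5 as [E5|E5]; [nra|lra].
Qed.

Lemma uniq T r r' : 0 < T -> 0 <= r < 1 -> r' < 1 -> T*(1+r*r) = 2*r ->
  T*r'*r' - 2*r' + T = 0 -> r = r'.
Proof.
  intros HT Hr Hr' H1 H2.
  assert (E : (r - r')*(T*(r+r') - 2) = 0) by nra.
  apply Rmult_integral in E. destruct E as [E|E]; [lra|].
  assert (E2 : T*(1 - r*r') = 0) by nra.
  apply Rmult_integral in E2. destruct E2 as [E2|E2]; [lra|].
  exfalso. destruct (Rle_lt_dec r' 0); nra.
Qed.

Lemma tanhD x : -1 < x < 1 -> tanh (ln ((1+x)/(1-x))) = 2*x/(1+x*x).
Proof.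
  intros Hx. unfold tanh, sinh, cosh. rewrite exp_Ropp, exp_ln.
  - field. repeat split; try lra; nra.
  - apply Rdiv_lt_0_compat; lra.
Qed.

Lemma rpoly s c k sg :
  k*(1+s*s)*(1+c*c) = 4*s*c -> k*k+sg*sg = 1 ->
  k*(1-s*s)*((c*(sg+1) - k*s)*(c*(sg+1) - k*s)) - 4*s*sg*(c*(sg+1)-k*s)*((sg+1) - c*k*s)
   + k*(1-s*s)*(((sg+1)-c*k*s)*((sg+1)-c*k*s)) = 0.
Proof. intros. nsatz. Qed.

Lemma rroot s c k sg : 0 < s -> 0 < sg ->
  k*(1+s*s)*(1+c*c) = 4*s*c -> k*k+sg*sg = 1 ->
  1 - c*(k/(sg+1)*s) <> 0 ->
  let T := k/sg*((1-s^2)/(2*s)) in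
  let r' := (c - k/(sg+1)*s)/(1-c*(k/(sg+1)*s)) in
  T*r'*r' - 2*r' + T = 0.
Proof.
  intros Hs Hsg H1 H2 HD T r'.
  assert (HD' : (sg+1) - c*k*s <> 0).
  { intro Z. apply HD. replace (1 - c*(k/(sg+1)*s)) with (((sg+1) - c*k*s)/(sg+1)) by (field; lra).
    rewrite Z. unfold Rdiv; ring. }
  replace (T*r'*r' - 2*r' + T) with
   ((k*(1-s*s)*((c*(sg+1) - k*s)*(c*(sg+1) - k*s)) - 4*s*sg*(c*(sg+1)-k*s)*((sg+1) - c*k*s)
   + k*(1-s*s)*(((sg+1)-c*k*s)*((sg+1)-c*k*s))) / (2*s*sg*((sg+1)-c*k*s)*((sg+1)-c*k*s))).
  - rewrite rpoly; auto. unfold Rdiv; ring.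
  - unfold T, r'. field. repeat split; lra.
Qed.

Lemma G2 a1 a2 b1 b2 c1 c2 :
  (a1*b1+a2*b2)*(1+(a1*a1+a2*a2)) = (a1*a1+a2*a2)*(1+(b1*b1+b2*b2)) ->
  (c1*b1+c2*b2)*(1+(c1*c1+c2*c2)) = (c1*c1+c2*c2)*(1+(b1*b1+b2*b2)) ->
  (2*(a1*a1+a2*a2)*b1 - (1+(a1*a1+a2*a2))*a1)*(2*(c1*c1+c2*c2)*b1 - (1+(c1*c1+c2*c2))*c1) +
  (2*(a1*a1+a2*a2)*b2 - (1+(a1*a1+a2*a2))*a2)*(2*(c1*c1+c2*c2)*b2 - (1+(c1*c1+c2*c2))*c2) = 0 ->
  (a1*c1+a2*c2)*(1+(a1*a1+a2*a2))*(1+(c1*c1+c2*c2)) = 4*(a1*a1+a2*a2)*(c1*c1+c2*c2).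
Proof. intros. nsatz. Qed.

Lemma gram a1 a2 b1 b2 c1 c2 s c k sg :
  s*s = a1*a1+a2*a2 -> c*c = c1*c1+c2*c2 -> a1*c1+a2*c2 = k*(s*c) -> k*k+sg*sg = 1 ->
  (b1*b1+b2*b2)*(s*s)*(c*c)*(sg*sg) =
  (a1*b1+a2*b2)*(a1*b1+a2*b2)*(c*c) - 2*(a1*b1+a2*b2)*(c1*b1+c2*b2)*(s*c*k)
  + (c1*b1+c2*b2)*(c1*b1+c2*b2)*(s*s).
Proof. intros. nsatz. Qed.

Lemma g3 ac SA SC s c k : ac*(1+SA)*(1+SC) = 4*SA*SC -> s*s = SA -> c*c = SC -> ac = k*(s*c) ->
  s*c*(k*(1+s*s)*(1+c*c) - 4*s*c) = 0.
Proof. intros. nsatz. Qed.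

Theorem mainTheorem1 (O A B C M : pt) (alpha d L ell h s t : R) :
  O = czero ->
  convex_quad O A B C ->
  hangle A O B = PI / 2 ->
  hangle B A C = PI / 2 ->
  hangle C B O = PI / 2 ->
  0 < alpha < PI / 2 ->
  hangle O A C = alpha ->
  hdist O A = d ->
  hdist A B = L ->
  hdist B C = ell ->
  hdist O C = L + h ->
  on_hseg O C M ->
  hdist O M = h ->
  s = cabs (csub A O) ->
  t = cabs (csub M O) ->
  tanh L = cos alpha / sin alpha * ((1 - s ^ 2) / (2 * s)) /\
  t = cos alpha / (sin alpha + 1) * s.
Proof.
  intros HO Hq HA HB HC Hal Hang Hd HL Hell HOC Hseg HM Hs Ht.
  subst O. clear Hd Hell Hseg.
  destruct A as [a1 a2], B as [b1 b2], C as [c1 c2].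
  destruct Hq as (_ & HiA & HiB & HiC & Hturn).
  apply disc_sq in HiA, HiB, HiC.
  assert (Hcr : a1*c2 - a2*c1 <> 0).
  { destruct Hturn as [(H1&_)|(H1&_)]; unfold hturn in H1; rewrite !tdir0 in H1; simpl in H1; lra. }
  assert (Huv : snd (cmul (cconj (tdir (b1,b2) (c1,c2))) (tdir (b1,b2) (a1,a2))) <> 0).
  { destruct Hturn as [(_&_&H1&_)|(_&_&H1&_)]; unfold hturn in H1; lra. }
  clear Hturn.
  assert (HSA : 0 < a1*a1+a2*a2).
  { destruct (Req_dec (a1*a1+a2*a2) 0) as [Z|Z]; [|nra].
    exfalso; apply Hcr. assert (a1 = 0) by nra. assert (a2 = 0) by nra. subst; ring. }
  assert (HSC : 0 < c1*c1+c2*c2).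
  { destruct (Req_dec (c1*c1+c2*c2) 0) as [Z|Z]; [|nra].
    exfalso; apply Hcr. assert (c1 = 0) by nra. assert (c2 = 0) by nra. subst; ring. }
  apply right_angle in HA, HB, HC.
  apply circ_right1 in HA. apply circ_right2 in HC.
  pose proof (circ_orth _ _ _ _ HA) as O1.
  pose proof (circ_orth _ _ _ _ HC) as O2.
  assert (N12 := twoD (fst (tdir (b1,b2) (a1,a2))) (snd (tdir (b1,b2) (a1,a2)))
                      (fst (tdir (b1,b2) (c1,c2))) (snd (tdir (b1,b2) (c1,c2)))
                      _ _ _ _ ltac:(destruct (tdir (b1,b2) (a1,a2)), (tdir (b1,b2) (c1,c2)); simpl in *; lra)
                      O1 O2
                      ltac:(destruct (tdir (b1,b2) (a1,a2)), (tdir (b1,b2) (c1,c2)); simpl in *; lra)).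
  pose proof (G2 _ _ _ _ _ _ HA HC N12) as HG.
  clear O1 O2 N12 HB Huv.
  rewrite cabs_sub0 in Hs.
  set (cc := cabs (c1,c2)).
  assert (Hss : s*s = a1*a1+a2*a2) by (rewrite Hs; apply cabs_sq).
  assert (Hcc : cc*cc = c1*c1+c2*c2) by apply cabs_sq.
  assert (Hs0 : 0 <= s) by (rewrite Hs; apply cabs_nonneg).
  assert (Hc0 : 0 <= cc) by apply cabs_nonneg.
  assert (Hs1 : 0 < s < 1) by nra.
  assert (Hc1 : 0 < cc < 1) by nra.
  pose proof (angle0 _ _ _ Hal Hang ltac:(rewrite <- Hs; lra) ltac:(fold cc; lra)) as Hk.
  rewrite <- Hs in Hk. fold cc in Hk. simpl in Hk.
  assert (Hk0 : 0 < cos alpha) by (apply cos_gt_0; lra).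
  assert (Hsg0 : 0 < sin alpha) by (apply sin_gt_0; pose proof PI_RGT_0; lra).
  assert (Hksg : cos alpha*cos alpha+sin alpha*sin alpha = 1) by (pose proof (sin2_cos2 alpha); unfold Rsqr in *; lra).
  clear Hang Hal. revert Hk0 Hsg0 Hksg Hk.
  generalize (cos alpha) as k. generalize (sin alpha) as sg. intros sg k Hk0 Hsg0 Hksg Hk.
  assert (Hac : a1*c1+a2*c2 = k*(s*cc)) by lra.
  assert (G3 : k*(1+s*s)*(1+cc*cc) = 4*s*cc).
  { assert (Z : s*cc*(k*(1+s*s)*(1+cc*cc) - 4*s*cc) = 0).
    { exact (g3 _ _ _ _ _ _ HG Hss Hcc Hac). }
    apply Rmult_integral in Z. destruct Z as [Z|Z]; [nra|lra]. }
  pose proof (gram _ _ b1 b2 _ _ _ _ _ _ Hss Hcc Hac Hksg) as Hgram.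
  rewrite <- Hss in HA. rewrite <- Hcc in HC.
  pose proof (scal s cc k sg _ _ _ ltac:(lra) ltac:(lra) HA HC G3 Hgram Hksg) as Hquad.
  pose proof (pdist a1 a2 b1 b2 HiA HiB) as (Hr & HrXY & HY).
  set (r := rr (a1,a2) (b1,b2)) in *.
  pose proof (final1 s sg k r _ _ (a1*b1+a2*b2) (b1*b1+b2*b2) Hs1 Hsg0 Hk0 HrXY HY ltac:(lra)
     ltac:(rewrite Hss; ring) ltac:(rewrite Hss; ring) HA Hquad) as Hfin.
  set (K := k/(sg+1)*s).
  assert (HK : 0 < K < 1).
  { unfold K. split. apply Rmult_lt_0_compat; [apply Rdiv_lt_0_compat|]; lra.
    assert (k < 1) by nra.
    assert (k/(sg+1) < 1) by (apply (Rmult_lt_reg_r (sg+1)); [lra|]; field_simplify; lra).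
    assert (0 < k/(sg+1)) by (apply Rdiv_lt_0_compat; lra). nra. }
  assert (HcK : 0 < 1 - cc*K) by nra.
  pose proof (rroot s cc k sg ltac:(lra) Hsg0 G3 Hksg ltac:(fold K; lra)) as Hroot.
  fold K in Hroot. simpl in Hroot.
  set (r' := (cc - K)/(1 - cc*K)) in *.
  assert (Hr'1 : r' < 1).
  { unfold r'. apply (Rmult_lt_reg_r (1 - cc*K)); [lra|]. field_simplify; nra. }
  assert (Hs2 : 0 < 1 - s^2) by (rewrite <- Rsqr_pow2; unfold Rsqr; nra).
  pose proof (uniq (k / sg * ((1 - s ^ 2) / (2 * s))) r r' ltac:(apply Rmult_lt_0_compat; [apply Rdiv_lt_0_compat; lra|apply Rdiv_lt_0_compat; lra])
                Hr Hr'1 Hfin Hroot) as Hrr.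
  rewrite hdist_eq in HL, HOC, HM. rewrite rr0 in HOC, HM. fold r in HL. fold cc in HOC.
  rewrite cabs_sub0 in Ht. rewrite <- Ht in HM.
  split.
  - rewrite <- HL, tanhD by lra.
    rewrite <- Hfin. field. nra.
  - assert (Ht0 : 0 <= t) by (rewrite Ht; apply cabs_nonneg).
    assert (HrK : r = (cc - K)/(1 - cc*K)) by (rewrite Hrr; reflexivity).
    assert (Hpc : 0 < (1+cc)/(1-cc)) by (apply Rdiv_lt_0_compat; lra).
    assert (Hpr : 0 < (1+r)/(1-r)) by (apply Rdiv_lt_0_compat; lra).
    destruct (Rlt_le_dec t 1) as [Ht1|Ht1].
    + assert (Hpt : 0 < (1+t)/(1-t)) by (apply Rdiv_lt_0_compat; lra).
      assert (E : (1+cc)/(1-cc) = (1+r)/(1-r) * ((1+t)/(1-t))).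
      { rewrite <- (exp_ln _ Hpc), <- (exp_ln _ Hpr), <- (exp_ln _ Hpt).
        rewrite HOC, HL, HM, exp_plus. reflexivity. }
      assert (E' : (1+cc)*((1-r)*(1-t)) = (1+r)*(1+t)*(1-cc)).
      { replace (1+cc) with ((1+cc)/(1-cc)*(1-cc)) by (field; lra).
        rewrite E. field; lra. }
      assert (E2 : t*(1-cc*r) = cc - r) by nra.
      assert (Hcr1 : 0 < 1 - cc*r) by nra.
      assert (Ht' : t = (cc-r)/(1-cc*r)).
      { apply (Rmult_eq_reg_r (1-cc*r)); [rewrite E2; field; lra | lra]. }
      rewrite Ht', HrK. field. split; lra.
    + exfalso.
      assert (Hln : ln ((1+t)/(1-t)) = 0).
      { unfold ln. destruct (Rlt_dec 0 ((1+t)/(1-t))) as [P|P]; auto.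
        exfalso. destruct (Req_dec t 1) as [E|E].
        - rewrite E in P. replace (1-1) with 0 in P by ring. unfold Rdiv in P. rewrite Rinv_0 in P. lra.
        - assert (Q : (1+t)/(1-t) = - ((1+t)/(t-1))) by (field; split; lra).
          assert (0 < (1+t)/(t-1)) by (apply Rdiv_lt_0_compat; lra).
          lra. }
      assert (Hh : h = 0) by lra.
      rewrite Hh, Rplus_0_r, <- HL in HOC.
      apply ln_inv in HOC; auto.
      assert (Ecr : cc = r).
      { assert (Z : (1+cc)*(1-r) = (1+r)*(1-cc)).
        { replace (1+cc) with ((1+cc)/(1-cc)*(1-cc)) by (field; lra).
          rewrite HOC. field; lra. }
        lra. }
      rewrite HrK in Ecr.
      assert (Z : cc*(1-cc*K) = cc - K) by (rewrite Ecr at 1; field; lra).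
      nra.
Qed.
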